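(* Suppose $0\le\alpha_3\le\alpha_2\le\alpha_1\le\pi/4$, and define $\zeta_0=\cos\alpha_1\cos\alpha_2\cos\alpha_3-\mathrm{i}\sin\alpha_1\sin\alpha_2\sin\alpha_3$, $\zeta_1=\cos\alpha_1\sin\alpha_2\sin\alpha_3-\mathrm{i}\sin\alpha_1\cos\alpha_2\cos\alpha_3$, $\zeta_2=\sin\alpha_1\cos\alpha_2\sin\alpha_3-\mathrm{i}\cos\alpha_1\sin\alpha_2\cos\alpha_3$, $\zeta_3=\sin\alpha_1\sin\alpha_2\cos\alpha_3-\mathrm{i}\cos\alpha_1\cos\alpha_2\sin\alpha_3$. Then $|\zeta_0|>|\zeta_1|=|\zeta_2|=|\zeta_3|>0$ if and only if $0<\alpha_3=\alpha_2=\alpha_1<\pi/4$.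
   Context: The numbers $|\zeta_k|$ are the four Schmidt coefficients of the two-qubit unitary $U(\alpha_1,\alpha_2,\alpha_3)=\exp[-\mathrm{i}\sum_{k=1}^3\alpha_k\sigma_k\otimes\sigma_k]=\sum_{k=0}^3\zeta_k\sigma_k\otimes\sigma_k$ ($\sigma_0=I$, $\sigma_k$ Pauli matrices). *)

(* Defs.v *)
From Stdlib Require Import Reals.
From Coquelicot Require Import Coquelicot.
Open Scope R_scope.

Definition zeta0 (a1 a2 a3 : R) : C :=
  (cos a1 * cos a2 * cos a3, - (sin a1 * sin a2 * sin a3)).
Definition zeta1 (a1 a2 a3 : R) : C :=
  (cos a1 * sin a2 * sin a3, - (sin a1 * cos a2 * cos a3)).
Definition zeta2 (a1 a2 a3 : R) : C :=
  (sin a1 * cos a2 * sin a3, - (cos a1 * sin a2 * cos a3)).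
Definition zeta3 (a1 a2 a3 : R) : C :=
  (sin a1 * sin a2 * cos a3, - (cos a1 * cos a2 * sin a3)).

(* Main.v *)
Require Import Defs.
From Stdlib Require Import Reals Lra Psatz.
From Coquelicot Require Import Coquelicot.
Open Scope R_scope.

Theorem lemma9 (a1 a2 a3 : R) :
  0 <= a3 -> a3 <= a2 -> a2 <= a1 -> a1 <= PI / 4 ->
  ((Cmod (zeta0 a1 a2 a3) > Cmod (zeta1 a1 a2 a3) /\
    Cmod (zeta1 a1 a2 a3) = Cmod (zeta2 a1 a2 a3) /\
    Cmod (zeta2 a1 a2 a3) = Cmod (zeta3 a1 a2 a3) /\
    Cmod (zeta3 a1 a2 a3) > 0)
   <->
   (0 < a3 /\ a3 = a2 /\ a2 = a1 /\ a1 < PI / 4)).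
Proof.
  intros h3 h32 h21 h1.
  pose proof PI_RGT_0 as HPI.
  assert (Hc : forall a, cos a ^ 2 = 1 - sin a ^ 2).
  { intro a. pose proof (sin2 a) as H. unfold Rsqr in H. nra. }
  assert (Hs2 : (1 / sqrt 2) ^ 2 = 1/2).
  { pose proof (sqrt_lt_R0 2 ltac:(lra)). field_simplify. 2: lra.
    rewrite pow2_sqrt; lra. }
  set (x1 := sin a1 ^ 2). set (x2 := sin a2 ^ 2). set (x3 := sin a3 ^ 2).
  set (N0 := x1*x2*x3 + (1-x1)*(1-x2)*(1-x3)).
  set (N1 := (1-x1)*x2*x3 + x1*(1-x2)*(1-x3)).
  set (N2 := x1*(1-x2)*x3 + (1-x1)*x2*(1-x3)).
  set (N3 := x1*x2*(1-x3) + (1-x1)*(1-x2)*x3).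
  assert (E0 : Cmod (zeta0 a1 a2 a3) = sqrt N0).
  { unfold Cmod, zeta0; simpl fst; simpl snd. f_equal.
    unfold N0, x1, x2, x3. rewrite <- !Hc. ring. }
  assert (E1 : Cmod (zeta1 a1 a2 a3) = sqrt N1).
  { unfold Cmod, zeta1; simpl fst; simpl snd. f_equal.
    unfold N1, x1, x2, x3. rewrite <- !Hc. ring. }
  assert (E2 : Cmod (zeta2 a1 a2 a3) = sqrt N2).
  { unfold Cmod, zeta2; simpl fst; simpl snd. f_equal.
    unfold N2, x1, x2, x3. rewrite <- !Hc. ring. }
  assert (E3 : Cmod (zeta3 a1 a2 a3) = sqrt N3).
  { unfold Cmod, zeta3; simpl fst; simpl snd. f_equal.
    unfold N3, x1, x2, x3. rewrite <- !Hc. ring. }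
  assert (Hpi2 : PI / 4 <= PI / 2) by lra.
  assert (m32 : sin a3 <= sin a2) by (apply sin_incr_1; lra).
  assert (m21 : sin a2 <= sin a1) by (apply sin_incr_1; lra).
  assert (m1 : sin a1 <= 1 / sqrt 2) by (rewrite <- sin_PI4; apply sin_incr_1; lra).
  assert (p3 : 0 <= sin a3) by (apply sin_ge_0; lra).
  assert (hx1 : x1 <= 1/2) by (unfold x1; rewrite <- Hs2; apply pow_incr; lra).
  assert (hx32 : x3 <= x2) by (unfold x3, x2; apply pow_incr; lra).
  assert (hx21 : x2 <= x1) by (unfold x1, x2; apply pow_incr; lra).
  assert (hx3 : 0 <= x3) by (unfold x3; nra).
  assert (n0 : 0 <= N0) by (unfold N0; nra).
  assert (n1 : 0 <= N1) by (unfold N1; nra).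
  assert (n2 : 0 <= N2) by (unfold N2; nra).
  assert (n3 : 0 <= N3) by (unfold N3; nra).
  rewrite E0, E1, E2, E3.
  split.
  - intros [A [B [C D]]].
    apply sqrt_lt_0 in A; auto.
    apply sqrt_inj in B; auto. apply sqrt_inj in C; auto.
    rewrite <- sqrt_0 in D. apply sqrt_lt_0 in D; [|lra|auto].
    assert (A' : (1 - 2*x1) * (1 - x2 - x3) > 0) by (unfold N0, N1 in A; nra).
    assert (l1 : 1 - 2*x1 > 0) by nra.
    assert (C' : (1 - 2*x1) * (x2 - x3) = 0) by (unfold N2, N3 in C; nra).
    assert (q23 : x2 = x3) by nra.
    assert (B' : (1 - 2*x3) * (x1 - x2) = 0) by (unfold N1, N2 in B; nra).
    assert (q12 : x1 = x2) by nra.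
    assert (D' : x3 > 0) by (unfold N3 in D; rewrite <- q23, <- q12 in D; nra).
    assert (s12 : sin a1 = sin a2) by (unfold x1, x2 in q12; nra).
    assert (s23 : sin a2 = sin a3) by (unfold x3, x2 in q23; nra).
    assert (e12 : a2 = a1).
    { destruct (Rle_lt_or_eq_dec _ _ h21) as [H|H]; auto.
      assert (sin a2 < sin a1) by (apply sin_increasing_1; lra). lra. }
    assert (e23 : a3 = a2).
    { destruct (Rle_lt_or_eq_dec _ _ h32) as [H|H]; auto.
      assert (sin a3 < sin a2) by (apply sin_increasing_1; lra). lra. }
    split; [|split; [auto|split; [auto|]]].
    + destruct (Rle_lt_or_eq_dec _ _ h3) as [H|H]; auto.
      exfalso. unfold x3 in D'. rewrite <- H, sin_0 in D'. lra.
    + destruct (Rle_lt_or_eq_dec _ _ h1) as [H|H]; auto.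
      exfalso. unfold x1 in l1. rewrite H, sin_PI4, Hs2 in l1. lra.
  - intros [A [B [C D]]].
    assert (q12 : x1 = x2) by (unfold x1, x2; rewrite C; auto).
    assert (q23 : x2 = x3) by (unfold x3, x2; rewrite B; auto).
    assert (ps : 0 < sin a3) by (apply sin_gt_0; lra).
    assert (lt1 : sin a1 < 1 / sqrt 2) by (rewrite <- sin_PI4; apply sin_increasing_1; lra).
    assert (hx1' : x1 < 1/2) by (unfold x1; rewrite <- Hs2; simpl; nra).
    assert (px : 0 < x3) by (unfold x3; nra).
    split; [|split; [|split]].
    + apply sqrt_lt_1; auto. unfold N0, N1. rewrite <- q23, <- q12. nra.
    + f_equal. unfold N1, N2. rewrite <- q23, <- q12. ring.
    + f_equal. unfold N2, N3. rewrite <- q23, <- q12. ring.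
    + rewrite <- sqrt_0. apply sqrt_lt_1; [lra|auto|].
      unfold N3. rewrite <- q23, <- q12. nra.
Qed.
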